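(* Let $S$ be a semiring, let $f:L\to M$ and $g:L\to N$ be morphisms of left $S$-semimodules, and let $(g',f';P)$ be a pushout of $(f,g)$, with $g':M\to P$, $f':N\to P$, $g'\circ f=f'\circ g$. Then: (1) if $f$ is surjective, then $f'$ is surjective; (2) if $f$ is $i$-normal (i.e. $f(L)\subseteq M$ is subtractive), then $f'$ is $i$-normal (i.e. $f'(N)\subseteq P$ is subtractive); (3) if $f$ is a normal epimorphism, then $f'$ is a normal epimorphism; (4) if $f$ is injective and $g$ is a normal epimorphism, then $f'$ is injective.
   Context: A semiring $(S,+,0,\cdot,1)$ consists of a commutative monoid $(S,+,0)$ and a monoid $(S,\cdot,1)$ with $0\neq 1$, absorbing zero and both distributive laws; left $S$-semimodules and $S$-linear maps are as for modules over rings (without subtraction). For an $S$-linear map $h:X\to Y$, $\mathrm{Ker}(h)=\{x\in X\mid h(x)=0\}$. $h$ is $k$-normal if $h(x)=h(x')$ implies $x+k=x'+k'$ for some $k,k'\in\mathrm{Ker}(h)$; $h$ is $i$-normal if $h(X)=\overline{h(X)}$, where for $A\subseteq Y$ the subtractive closure is $\overline{A}=\{y\in Y\mid y+a=a'\text{ for some }a,a'\in A\}$ (a subsemimodule $A$ is subtractive if $A=\overline A$). A normal epimorphism is a surjective $k$-normal $S$-linear map. A pushout of $(f,g)$ is a triple $(g',f';P)$ with $S$-linear $g':M\to P$, $f':N\to P$, $g'\circ f=f'\circ g$, such that for every $Q$ and $S$-linear $g^*:M\to Q$, $f^*:N\to Q$ with $g^*\circ f=f^*\circ g$ there is a unique $S$-linear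 $\varphi:P\to Q$ with $\varphi\circ g'=g^*$, $\varphi\circ f'=f^*$. *)

(* Defs.v *)
From HB Require Import structures.
From mathcomp Require Import all_boot all_algebra.
Set Implicit Arguments. Unset Strict Implicit. Unset Printing Implicit Defensive.
Import GRing.Theory.
Local Open Scope ring_scope.

Section SemiModDefs.
Variable S : nzSemiRingType.

Definition Ker (X Y : lSemiModType S) (h : {linear X -> Y}) : X -> Prop :=
  fun x => h x = 0.

Definition Im (X Y : lSemiModType S) (h : {linear X -> Y}) : Y -> Prop :=
  fun y => exists x, h x = y.

Definition sub_closure (Y : lSemiModType S) (A : Y -> Prop) : Y -> Prop :=
  fun y => exists a a', A a /\ A a' /\ y + a = a'.

Definition k_normal (X Y : lSemiModType S) (h : {linear X -> Y}) : Prop :=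
  forall x x', h x = h x' ->
    exists k k', Ker h k /\ Ker h k' /\ x + k = x' + k'.

Definition i_normal (X Y : lSemiModType S) (h : {linear X -> Y}) : Prop :=
  forall y, Im h y <-> sub_closure (Im h) y.

Definition normal_epi (X Y : lSemiModType S) (h : {linear X -> Y}) : Prop :=
  (forall y, exists x, h x = y) /\ k_normal h.

Definition is_pushout (L M N P : lSemiModType S)
  (f : {linear L -> M}) (g : {linear L -> N})
  (g' : {linear M -> P}) (f' : {linear N -> P}) : Prop :=
  (forall l, g' (f l) = f' (g l)) /\
  forall (Q : lSemiModType S) (gs : {linear M -> Q}) (fs : {linear N -> Q}),
    (forall l, gs (f l) = fs (g l)) ->
    exists phi : {linear P -> Q},
      ((forall m, phi (g' m) = gs m) /\ (forall n, phi (f' n) = fs n)) /\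
      forall psi : {linear P -> Q},
        (forall m, psi (g' m) = gs m) -> (forall n, psi (f' n) = fs n) ->
        forall p, psi p = phi p.

End SemiModDefs.

(* Main.v *)
Require Import Defs.
From HB Require Import structures.
From mathcomp Require Import all_boot all_algebra.
From Stdlib Require Import ClassicalEpsilon ProofIrrelevance FunctionalExtensionality PropExtensionality.
Set Implicit Arguments. Unset Strict Implicit. Unset Printing Implicit Defensive.
Import GRing.Theory.
Local Open Scope ring_scope.

Definition closedP (S : nzSemiRingType) (V : lSemiModType S) (A : V -> Prop) : Prop :=
  [/\ A 0, (forall x y, A x -> A y -> A (x + y)) & (forall (s : S) x, A x -> A (s *: x))].

Definition toB (P : Prop) : bool := if excluded_middle_informative P then true else false.
Lemma toBP (P : Prop) : toB P <-> P.
Proof. by rewrite /toB; case: excluded_middle_informative. Qed.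

Section MkLin.
Variables (S : nzSemiRingType) (U V : lSemiModType S) (f : U -> V).
Definition linP := (forall x y, f (x + y) = f x + f y) /\ (forall (a : S) x, f (a *: x) = a *: f x).
Variable fL : linP.
Definition mklin (_ : linP) : U -> V := f.
Lemma mklin_lin : GRing.semilinear_for *:%R (mklin fL).
Proof. by case: fL => D Z; split=> [a x|x y]; rewrite /mklin. Qed.
HB.instance Definition _ := GRing.isSemilinear.Build S U V *:%R (mklin fL) mklin_lin.
End MkLin.

Section SubMod.
Variables (S : nzSemiRingType) (V : lSemiModType S) (A : V -> Prop) (H : closedP A).
Definition subT : Type := let _ := H in {x : V | toB (A x)}.
HB.instance Definition _ := Choice.on subT.
Lemma A0 : toB (A 0). Proof. by case: H => *; apply/toBP. Qed.
Lemma AD x y : toB (A x) -> toB (A y) -> toB (A (x + y)).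
Proof. by case: H => _ h _ /toBP ? /toBP ?; apply/toBP; apply: h. Qed.
Lemma AZ (s : S) x : toB (A x) -> toB (A (s *: x)).
Proof. by case: H => _ _ h /toBP ?; apply/toBP; apply: h. Qed.
Definition sub0 : subT := exist _ 0 A0.
Definition subadd (x y : subT) : subT := exist _ (val x + val y) (AD (valP x) (valP y)).
Definition subscale (s : S) (x : subT) : subT := exist _ (s *: val x) (AZ s (valP x)).
Lemma subaddA : associative subadd.
Proof. by move=> x y z; apply: val_inj; rewrite /= addrA. Qed.
Lemma subaddC : commutative subadd.
Proof. by move=> x y; apply: val_inj; rewrite /= addrC. Qed.
Lemma subadd0 : left_id sub0 subadd.
Proof. by move=> x; apply: val_inj; rewrite /= add0r. Qed.
HB.instance Definition _ := GRing.isNmodule.Build subT subaddA subaddC subadd0.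
Lemma subscaleA a b v : subscale a (subscale b v) = subscale (a * b) v.
Proof. by apply: val_inj; rewrite /= scalerA. Qed.
Lemma subscale0 v : subscale 0 v = 0.
Proof. by apply: val_inj; rewrite /= scale0r. Qed.
Lemma subscale1 : left_id 1 subscale.
Proof. by move=> v; apply: val_inj; rewrite /= scale1r. Qed.
Lemma subscaleDr : right_distributive subscale +%R.
Proof. by move=> a u v; apply: val_inj; rewrite /= scalerDr. Qed.
Lemma subscaleDl v : {morph subscale^~ v: a b / a + b}.
Proof. by move=> a b; apply: val_inj; rewrite /= scalerDl. Qed.
HB.instance Definition _ := GRing.Nmodule_isLSemiModule.Build S subT
  subscaleA subscale0 subscale1 subscaleDr subscaleDl.
Lemma subT_addE (x y : subT) : val (x + y) = val x + val y. Proof. by []. Qed.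
Lemma subT_scaleE s (x : subT) : val (s *: x) = s *: val x. Proof. by []. Qed.
Lemma subT_inP (x : subT) : A (val x). Proof. exact/toBP/(valP x). Qed.
Definition subIn (x : V) (h : A x) : subT := exist _ x (proj2 (toBP _) h).
End SubMod.

Section Quot.
Variables (S : nzSemiRingType) (V : lSemiModType S) (K : V -> Prop) (H : closedP K).
Definition Rb (x y : V) : Prop := exists k k', K k /\ K k' /\ x + k = y + k'.
Lemma Rb_refl x : Rb x x.
Proof. by case: H => K0 _ _; exists 0, 0. Qed.
Lemma Rb_sym x y : Rb x y -> Rb y x.
Proof. by case=> k [k' [? [? e]]]; exists k', k. Qed.
Lemma Rb_trans x y z : Rb x y -> Rb y z -> Rb x z.
Proof.
case: H => _ KD _ [k [k' [Kk [Kk' e1]]]] [j [j' [Kj [Kj' e2]]]].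
exists (k + j), (k' + j'); split; [exact: KD|split; [exact: KD|]].
by rewrite addrA e1 addrAC e2 addrAC -addrA.
Qed.
Lemma Rb_add x y x' y' : Rb x y -> Rb x' y' -> Rb (x + x') (y + y').
Proof.
case: H => _ KD _ [k [k' [Kk [Kk' e1]]]] [j [j' [Kj [Kj' e2]]]].
exists (k + j), (k' + j'); split; [exact: KD|split; [exact: KD|]].
by rewrite addrACA e1 e2 addrACA.
Qed.
Lemma Rb_scale (s : S) x y : Rb x y -> Rb (s *: x) (s *: y).
Proof.
case: H => _ _ KZ [k [k' [Kk [Kk' e1]]]].
by exists (s *: k), (s *: k'); split; [exact: KZ|split; [exact: KZ|]]; rewrite -!scalerDr e1.
Qed.
Definition rep (x : V) : V := epsilon (inhabits x) (Rb x).
Lemma rep_R x : Rb x (rep x).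
Proof. by apply: (epsilon_spec (inhabits x) (Rb x)); exists x; apply: Rb_refl. Qed.
Lemma rep_eq x y : Rb x y -> rep x = rep y.
Proof.
move=> r; rewrite /rep.
have e : Rb x = Rb y.
  apply: functional_extensionality => z; apply: propositional_extensionality; split.
    by apply: Rb_trans; apply: Rb_sym.
  exact: Rb_trans.
have ex : inhabits x = inhabits y by apply: proof_irrelevance.
by rewrite ex e.
Qed.
Definition qT : Type := let _ := H in {x : V | rep x == x}.
HB.instance Definition _ := Choice.on qT.
Lemma rep_idem x : rep (rep x) == rep x.
Proof. by apply/eqP/rep_eq/Rb_sym/rep_R. Qed.
Definition pi (x : V) : qT := exist _ (rep x) (rep_idem x).
Lemma pi_eq x y : pi x = pi y <-> Rb x y.
Proof.
split.
  move=> /(congr1 val) /= e; apply: (Rb_trans (rep_R x)); rewrite e.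
  exact/Rb_sym/rep_R.
by move=> r; apply: val_inj; rewrite /= (rep_eq r).
Qed.
Lemma pi_val (q : qT) : pi (val q) = q.
Proof. by apply: val_inj; rewrite /=; apply/eqP/(valP q). Qed.
Lemma val_pi x : Rb (val (pi x)) x.
Proof. exact/Rb_sym/rep_R. Qed.
Definition q0 : qT := pi 0.
Definition qadd (a b : qT) : qT := pi (val a + val b).
Definition qscale (s : S) (a : qT) : qT := pi (s *: val a).
Lemma qaddA : associative qadd.
Proof.
move=> a b c; apply/pi_eq.
apply: (Rb_trans (Rb_add (Rb_refl _) (val_pi _))); rewrite addrA.
exact: (Rb_sym (Rb_add (val_pi _) (Rb_refl _))).
Qed.
Lemma qaddC : commutative qadd.
Proof. by move=> a b; rewrite /qadd addrC. Qed.
Lemma qadd0 : left_id q0 qadd.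
Proof.
move=> a; rewrite -[RHS]pi_val; apply/pi_eq.
by apply: (Rb_trans (Rb_add (val_pi _) (Rb_refl _))); rewrite add0r; apply: Rb_refl.
Qed.
HB.instance Definition _ := GRing.isNmodule.Build qT qaddA qaddC qadd0.
Lemma qscaleA a b v : qscale a (qscale b v) = qscale (a * b) v.
Proof.
apply/pi_eq; rewrite -scalerA; exact: Rb_scale (val_pi _).
Qed.
Lemma qscale0 v : qscale 0 v = 0.
Proof. by rewrite /qscale scale0r. Qed.
Lemma qscale1 : left_id 1 qscale.
Proof. by move=> v; rewrite /qscale scale1r pi_val. Qed.
Lemma qscaleDr : right_distributive qscale +%R.
Proof.
move=> s u v; apply/pi_eq.
apply: (Rb_trans (Rb_scale _ (val_pi _))); rewrite scalerDr.
exact: Rb_sym (Rb_add (val_pi _) (val_pi _)).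
Qed.
Lemma qscaleDl v : {morph qscale^~ v: a b / a + b}.
Proof.
move=> a b; apply/pi_eq; rewrite /= scalerDl.
exact: Rb_sym (Rb_add (val_pi _) (val_pi _)).
Qed.
HB.instance Definition _ := GRing.Nmodule_isLSemiModule.Build S qT
  qscaleA qscale0 qscale1 qscaleDr qscaleDl.
Lemma pi_lin : linP pi.
Proof.
split=> [x y|a x]; apply/pi_eq; apply: Rb_sym.
  exact: Rb_add (val_pi _) (val_pi _).
exact: Rb_scale (val_pi _).
Qed.
Definition piL : {linear V -> qT} := mklin pi_lin.
Lemma piL_eq x y : piL x = piL y <-> Rb x y.
Proof. exact: pi_eq. Qed.
Lemma piL_K k : K k -> piL k = 0.
Proof.
case: H => K0 _ _ Kk; apply/pi_eq; exists 0, k; split=> //; split=> //.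
by rewrite addr0 add0r.
Qed.
End Quot.


Lemma factor (S : nzSemiRingType) (L N W : lSemiModType S)
  (g : {linear L -> N}) (h : {linear L -> W}) :
  normal_epi g -> (forall k, g k = 0 -> h k = 0) ->
  exists fs : {linear N -> W}, forall l, fs (g l) = h l.
Proof.
case=> gs gk hK.
pose pre n := epsilon (inhabits 0) (fun l => g l = n).
have preP n : g (pre n) = n by apply: (epsilon_spec (inhabits 0) (fun l => g l = n)); apply: gs.
have resp l l' : g l = g l' -> h l = h l'.
  move/gk => [k [k' [Kk [Kk' e]]]].
  by have := congr1 h e; rewrite !linearD (hK _ Kk) (hK _ Kk') !addr0.
have Lh : linP (fun n => h (pre n)).
  split=> [x y|a x].
    by rewrite -linearD; apply: resp; rewrite linearD !preP.
  by rewrite -linearZ; apply: resp; rewrite linearZ !preP.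
by exists (mklin Lh) => l /=; apply: resp; rewrite preP.
Qed.

Unset Implicit Arguments.
Set Strict Implicit.
Theorem mainTheorem3 (S : nzSemiRingType) (L M N P : lSemiModType S)
  (f : {linear L -> M}) (g : {linear L -> N})
  (g' : {linear M -> P}) (f' : {linear N -> P}) :
  is_pushout f g g' f' ->
  [/\ (forall m : M, exists l : L, f l = m) -> (forall p : P, exists n : N, f' n = p),
      i_normal f -> i_normal f',
      normal_epi f -> normal_epi f'
    & (forall l1 l2 : L, f l1 = f l2 -> l1 = l2) -> normal_epi g ->
      (forall n1 n2 : N, f' n1 = f' n2 -> n1 = n2)].
Proof.
move=> [comm UP].
have JS : forall p, exists m n, p = g' m + f' n.
  pose A := fun p : P => exists m n, p = g' m + f' n.
  have HA : closedP A.
    split.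
    - by exists 0, 0; rewrite !linear0 addr0.
    - by move=> x y [m [n ->]] [m' [n' ->]]; exists (m + m'), (n + n'); rewrite !linearD addrACA.
    - by move=> s x [m [n ->]]; exists (s *: m), (s *: n); rewrite !linearZ scalerDr.
  have Ag m : A (g' m) by exists m, 0; rewrite linear0 addr0.
  have Af n : A (f' n) by exists 0, n; rewrite linear0 add0r.
  have Lg : linP (fun m => subIn HA (Ag m)).
    by split=> *; apply: val_inj; rewrite ?subT_addE ?subT_scaleE /= ?linearD ?linearZ.
  have Lf : linP (fun n => subIn HA (Af n)).
    by split=> *; apply: val_inj; rewrite ?subT_addE ?subT_scaleE /= ?linearD ?linearZ.
  have [phi [[phg phf] _]] := UP _ (mklin Lg) (mklin Lf) (fun l => val_inj (comm l : val (mklin Lg (f l)) = val (mklin Lf (g l)))).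
  have Lpsi : linP (fun p => val (phi p)).
    by split=> *; rewrite ?linearD ?subT_addE ?linearZ ?subT_scaleE.
  have Lid : linP (fun p : P => p) by [].
  have [phi0 [_ uniq]] := UP P g' f' comm.
  move=> p.
  have e1 := uniq (mklin Lpsi) (fun m => congr1 val (phg m)) (fun n => congr1 val (phf n)) p.
  have e2 := uniq (mklin Lid) (fun m => erefl) (fun n => erefl) p.
  have : A (val (phi p)) by exact: subT_inP.
  change (val (phi p) = phi0 p) in e1; change (p = phi0 p) in e2.
  by rewrite e1 -e2.
have part1 : (forall m : M, exists l : L, f l = m) -> (forall p : P, exists n : N, f' n = p).
  move=> fsurj p; have [m [n ->]] := JS p; have [l <-] := fsurj m.
  by exists (g l + n); rewrite linearD -comm.
split=> //.
- move=> fin y; split.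
    by move=> Iy; exists 0, y; split; [exists 0; rewrite linear0|split=> //; rewrite addr0].
  move=> [a [a' [[n0 <-] [[n1 <-] e]]]].
  have [m [n ey]] := JS y; rewrite ey in e.
  pose K := fun x : M => exists l, f l = x.
  have HK : closedP K.
    split.
    - by exists 0; rewrite linear0.
    - by move=> x y' [l <-] [l' <-]; exists (l + l'); rewrite linearD.
    - by move=> s x [l <-]; exists (s *: l); rewrite linearZ.
  have L0 : linP (fun _ : N => (0 : qT HK)) by split=> *; rewrite ?addr0 ?scaler0.
  have cmp : forall l, piL HK (f l) = mklin L0 (g l) by move=> l; apply: piL_K; exists l.
  have [phi [[phg phf] _]] := UP _ (piL HK) (mklin L0) cmp.
  have := congr1 phi e; rewrite !linearD !phg !phf /mklin !addr0 => eqm.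
  have /pi_eq : pi HK m = pi HK 0 by exact: eqm.
  move=> [k [k' [[l1 Hl1] [[l2 Hl2] em]]]].
  have : K m by apply/fin; exists k, k'; split; [exists l1|split; [exists l2|]] => //; rewrite em add0r.
  move=> [l0 Hl0]; rewrite ey -Hl0 comm -linearD; by eexists.
- move=> fne; split; first by apply: part1; case: fne => fs _.
  move=> n n' e.
  pose K := fun y : N => exists k, f k = 0 /\ g k = y.
  have HK : closedP K.
    split.
    - by exists 0; rewrite !linear0.
    - by move=> x y [k [fk <-]] [k' [fk' <-]]; exists (k + k'); rewrite !linearD fk fk' addr0.
    - by move=> s x [k [fk <-]]; exists (s *: k); rewrite !linearZ_LR fk scaler0.
  have Lh : linP (fun l => piL HK (g l)) by split=> *; rewrite /= ?linearD ?linearZ_LR.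
  have [gs gsP] := factor (h := mklin Lh) fne (fun k fk => piL_K HK (ex_intro _ k (conj fk erefl))).
  have [phi [[phg phf] _]] := UP _ gs (piL HK) gsP.
  have := congr1 phi e; rewrite !phf.
  move=> /piL_eq [y [y' [[k [fk gk]] [[k' [fk' gk']] ey]]]].
  exists y, y'; split; [|split] => //; rewrite /Ker.
    by rewrite -gk -comm fk linear0.
  by rewrite -gk' -comm fk' linear0.
- move=> finj gne n1 n2 e.
  pose K := fun x : M => exists k, g k = 0 /\ f k = x.
  have HK : closedP K.
    split.
    - by exists 0; rewrite !linear0.
    - by move=> x y [k [fk <-]] [k' [fk' <-]]; exists (k + k'); rewrite !linearD fk fk' addr0.
    - by move=> s x [k [fk <-]]; exists (s *: k); rewrite !linearZ_LR fk scaler0.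
  have Lh : linP (fun l => piL HK (f l)) by split=> *; rewrite /= ?linearD ?linearZ_LR.
  have [fs fsP] := factor (h := mklin Lh) gne (fun k gk => piL_K HK (ex_intro _ k (conj gk erefl))).
  have [phi [[phg phf] _]] := UP _ (piL HK) fs (fun l => esym (fsP l)).
  have := congr1 phi e; rewrite !phf.
  case: gne => gs _.
  have [l1 <-] := gs n1; have [l2 <-] := gs n2.
  rewrite !fsP /= => /piL_eq [x [x' [[k [gk <-]] [[k' [gk' <-]] ex]]]].
  have := finj _ _ (etrans (linearD f _ _) (etrans ex (esym (linearD f _ _)))).
  by move/(congr1 g); rewrite !linearD gk gk' !addr0.
Qed.
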